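(* In the setting described in the context, for any $s\in\{1,\dots,T\}$, any $k\in\{1,\dots,K\}$ and any $0<\beta<1$, $$\big(1-T^{\beta-1}\big)\|\mathbf{v}_k^*\|_2^2\le\|\mathbf{v}^*_{k\setminus s}\|_2^2\le\|\mathbf{v}_k^*\|_2^2$$ with probability at least $1-T^{-\beta}$.
   Context: Fixed inputs $\mathbf{x}_1,\dots,\mathbf{x}_N\in\mathbb{R}^d$. Networks $f_\theta(\mathbf{x})=\sum_{k=1}^K\mathbf{v}_k(\mathbf{w}_k^\top\mathbf{x}+b_k)_+$ with $\mathbf{w}_k\in\mathbb{S}^{d-1}$, $b_k\in\mathbb{R}$, $\mathbf{v}_k\in\mathbb{R}^T$, $K\ge N^2$. Training problem: $\min_\theta\sum_{i=1}^N\mathcal{L}(\mathbf{y}_i,f_\theta(\mathbf{x}_i))+\lambda\sum_{k=1}^K\|\mathbf{v}_k\|_2$, $\lambda>0$, with $\mathcal{L}(\mathbf{u},\mathbf{v})=\sum_t\mathcal{L}(u_t,v_t)$ separable across tasks and lower semicontinuous in its second argument. The task label vectors $\mathbf{y}_{\cdot,t}=(y_{1t},\dots,y_{Nt})$, $t=1,\dots,T$, are exchangeable random vectors. The optimal output weights $\mathbf{v}_k^*=(v^*_{k1},\dots,v^*_{kT})$ are selected by a measurable deterministic map of the labels that is permutation invariant: permuting the $T$ coordinates of all labels permutes the coordinates of all selected $\mathbf{v}_k^*$ in the same way. $\mathbf{v}^*_{k\setminus s}$ denotes $\mathbf{v}_k^*$ with its $s$-th entry removed. *)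

(* Defs.v *)
From HB Require Import structures.
From mathcomp Require Import all_boot all_order all_algebra perm.
From mathcomp Require Import all_classical all_reals all_analysis.
Set Implicit Arguments. Unset Strict Implicit. Unset Printing Implicit Defensive.
Import Order.TTheory GRing.Theory Num.Theory.
Local Open Scope classical_set_scope.
Local Open Scope ring_scope.

(** Labels: [y : labels R N T], with [y t i] = y_{i t}
    (task t, sample i); so [y t] is the task label vector y_{.,t}. *)
Definition labels (R : realType) (N T : nat) := 'I_T -> 'I_N -> R.

Definition perm_labels (R : realType) (N T : nat) (sigma : {perm 'I_T})
  (y : labels R N T) : labels R N T := fun t => y (sigma t).

(** sigma-algebra on the label space R^{N x T} generated by the coordinates
    (= product Borel sigma-algebra). *)
Definition label_measurable (R : realType) (N T : nat) : set (set (labels R N T)) :=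
  <<s [set A | exists (t : 'I_T) (i : 'I_N) (B : set R),
                 measurable B /\ A = [set y | B (y t i)]] >>.

Record params (R : realType) (d K T : nat) := Params {
  pw : 'I_K -> 'I_d -> R ;
  pb : 'I_K -> R ;
  pv : 'I_K -> 'I_T -> R }.

Definition feasible (R : realType) (d K T : nat) (th : params R d K T) : Prop :=
  forall k, \sum_(j < d) pw th k j ^+ 2 = 1.

Definition net (R : realType) (d K T : nat) (th : params R d K T)
  (x : 'I_d -> R) (t : 'I_T) : R :=
  \sum_(k < K) pv th k t * Num.max 0 (\sum_(j < d) pw th k j * x j + pb th k).

Definition norm2 (R : realType) (T : nat) (v : 'I_T -> R) : R :=
  Num.sqrt (\sum_(t < T) v t ^+ 2).

(** Training objective, with the separable loss
    L(u, v) = sum_t loss u_t v_t. *)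
Definition objective (R : realType) (d N K T : nat) (loss : R -> R -> R)
  (lambda : R) (x : 'I_N -> 'I_d -> R) (y : labels R N T)
  (th : params R d K T) : R :=
  \sum_(i < N) \sum_(t < T) loss (y t i) (net th (x i) t)
  + lambda * \sum_(k < K) norm2 (pv th k).

(* Main.v *)
Set Warnings "-all".
Require Import Defs.
From HB Require Import structures.
From mathcomp Require Import all_boot all_order all_algebra perm.
From mathcomp Require Import all_classical all_reals all_analysis.
From mathcomp Require Import measurable_realfun.
From mathcomp Require Import lra.
Import Order.TTheory GRing.Theory Num.Theory numFieldNormedType.Exports.
Local Open Scope classical_set_scope.
Local Open Scope ring_scope.

Definition Gen (R : realType) (N T : nat) : set (set (labels R N T)) :=
  [set A | exists (t : 'I_T) (i : 'I_N) (B : set R),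
                 measurable B /\ A = [set y | B (y t i)]].
Definition L (R : realType) (N T : nat) := g_sigma_algebraType (Gen R N T).

Lemma L_meas_fun (R : realType) (N T : nat) (f : L R N T -> R) :
  (forall B : set R, measurable B -> label_measurable [set y | B (f y)]) ->
  measurable_fun setT f.
Proof.
move=> hf _ B mB; rewrite setTI; exact: (hf B mB).
Qed.

Lemma pos_label_meas (R : realType) (N T : nat) (F : L R N T -> R) :
  measurable_fun setT F -> label_measurable [set y | 0 < F y].
Proof.
move=> mF.
have := mF measurableT _ (measurable_itv `]0, +oo[).
rewrite setTI.
have -> : F @^-1` `]0, +oo[%classic = [set y | 0 < F y].
  by apply/seteqP; split => y /=; rewrite in_itv /= andbT.
by [].
Qed.

Lemma count_bound (R : realType) (T : nat) (v : 'I_T -> R) (c B : R) :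
  0 < c -> c * B = 1 ->
  \sum_(t < T) (if 0 < v t ^+ 2 - c * \sum_(u < T) v u ^+ 2 then 1 else 0) <= B.
Proof.
move=> c0 cB.
have B0 : 0 < B.
  by rewrite -(pmulr_rgt0 _ c0) cB.
set V := \sum_(u < T) v u ^+ 2.
have V0 : 0 <= V by apply: sumr_ge0 => u _; exact: sqr_ge0.
have key : (\sum_(t < T) (if 0 < v t ^+ 2 - c * V then 1 else 0)) * (c * V) <= V.
  rewrite mulr_suml; apply: (@le_trans _ _ (\sum_(t < T) v t ^+ 2)); last by [].
  apply: ler_sum => t _; case: ifP => h; rewrite ?mul1r ?mul0r ?sqr_ge0 //.
  by apply: ltW; rewrite -subr_gt0.
have [Vz|Vp] := eqVneq V 0.
  rewrite big1 ?ltW // => t _.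
  have : v t ^+ 2 <= V.
    rewrite /V (bigD1 t) //= lerDl; apply: sumr_ge0 => u _; exact: sqr_ge0.
  by rewrite Vz => h; rewrite mulr0 subr0 ltNge h.
have Vpos : 0 < V by rewrite lt_neqAle eq_sym Vp V0.
set S := \sum_(t < T) _ in key *.
have : S * c <= 1.
  by rewrite -(ler_pM2r Vpos) mul1r -mulrA.
move=> h; rewrite -[S]mulr1 -cB mulrA.
by rewrite -{2}[B]mul1r ler_pM2r.
Qed.
Lemma indic_if (T0 : Type) (R : realType) (A : set T0) (P0 : T0 -> bool) w :
  A = [set x | P0 x] -> (\1_A w : R) = if P0 w then 1 else 0.
Proof.
move=> ->; rewrite indicE; case: (boolP (P0 w)) => h.
  by rewrite mem_set.
by rewrite memNset //; apply/negP.
Qed.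

Theorem lemma2 (R : realType) (d N K T : nat)
  (x : 'I_N -> 'I_d -> R)
  (loss : R -> R -> R) (lambda : R)
  (dO : measure_display) (Omega : measurableType dO)
  (P : probability Omega R)
  (Y : Omega -> labels R N T)
  (sel : labels R N T -> params R d K T)
  (s : 'I_T) (k : 'I_K) (beta : R) :
  (N ^ 2 <= K)%N ->
  0 < lambda ->
  (forall u : R, lower_semicontinuous (fun v : R => (loss u v)%:E)) ->
  (* Y is a random element of the label space *)
  (forall A, label_measurable A -> measurable (Y @^-1` A)) ->
  (* the task label vectors y_{.,1}, ..., y_{.,T} are exchangeable *)
  (forall (sigma : {perm 'I_T}) A, label_measurable A ->
      P (Y @^-1` A) = P ((fun w => perm_labels sigma (Y w)) @^-1` A)) ->
  (* sel y is an optimal solution of the training problem for labels y *)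
  (forall y, feasible (sel y) /\
     forall th : params R d K T, feasible th ->
       objective loss lambda x y (sel y) <= objective loss lambda x y th) ->
  (* the selection of the output weights is measurable *)
  (forall (k' : 'I_K) (t : 'I_T) (B : set R), measurable B ->
      label_measurable [set y | B (pv (sel y) k' t)]) ->
  (* and permutation invariant *)
  (forall (sigma : {perm 'I_T}) y (k' : 'I_K) (t : 'I_T),
      pv (sel (perm_labels sigma y)) k' t = pv (sel y) k' (sigma t)) ->
  0 < beta < 1 ->
  ((1 - T%:R `^ (- beta))%:E <=
  P [set w | let v := pv (sel (Y w)) k in (
             (1 - T%:R `^ (beta - 1)) * \sum_(t < T) v t ^+ 2
               <= \sum_(t < T | t != s) v t ^+ 2
             /\ \sum_(t < T | t != s) v t ^+ 2 <= \sum_(t < T) v t ^+ 2)%R])%E.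
Proof.
move=> _ _ _ hY hex _ hmeas hinv /andP[b0 b1].
have T0 : (0 < T)%N by case: s => i /= /(leq_ltn_trans (leq0n i)).
have Tpos : (0 : R) < T%:R by rewrite ltr0n.
have Tne0 : (T%:R : R) != 0 by rewrite gt_eqF.
set c := T%:R `^ (beta - 1).
set a := T%:R `^ (- beta).
have c0 : 0 < c by apply: powR_gt0.
have a0 : 0 <= a by apply: powR_ge0.
have cB : c * (T%:R * a) = 1.
  rewrite /c /a -{2}(powRr1 (ltW Tpos)) mulrA -powRD; last by rewrite Tne0 implybT.
  rewrite -powRD; last by rewrite Tne0 implybT.
  by rewrite subrK addrN powRr0.
pose F (t : 'I_T) (y : L R N T) : R :=
  (pv (sel y) k t) ^+ 2 - c * \sum_(u < T) (pv (sel y) k u) ^+ 2.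
have mh : forall t, measurable_fun setT (fun y : L R N T => pv (sel y) k t).
  by move=> t; apply: L_meas_fun => B mB; exact: hmeas.
have mF : forall t, measurable_fun setT (F t).
  move=> t; apply: measurable_realfun.measurable_funB; first exact: measurable_realfun.measurable_funX.
  apply: measurable_realfun.measurable_funM; first exact: measurable_cst.
  by apply: measurable_sum => u; exact: measurable_realfun.measurable_funX.
have Alab : forall t, label_measurable [set y | 0 < F t y].
  by move=> t; apply: pos_label_meas.
pose E (t : 'I_T) : set Omega := Y @^-1` [set y | 0 < F t y].
have mE : forall t, measurable (E t) by move=> t; exact: hY.
have Eeq : forall t, P (E t) = P (E s).
  move=> t.
  have Fp : forall y, F s (perm_labels (tperm s t) y) = F t y.
    move=> y; rewrite /F hinv tpermL; congr (_ - c * _).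
    under eq_bigr do rewrite hinv.
    by rewrite [RHS](reindex_perm (tperm s t)).
  rewrite /E (hex (tperm s t) _ (Alab s)); congr (P _).
  by apply/seteqP; split => w /=; rewrite Fp.
have ptw : forall w, (\sum_(t < T) (\1_(E t) w)%:E <= (T%:R * a)%:E)%E.
  move=> w; rewrite sumEFin lee_fin.
  rewrite (eq_bigr (fun t => if 0 < F t (Y w) then 1 else 0)); last first.
    by move=> t _; exact: (@indic_if _ _ _ (fun w => 0 < F t (Y w)) _ erefl).
  by rewrite /F; exact: (@count_bound _ _ (pv (sel (Y w)) k) c _ c0 cB).
have mI : forall t, measurable_fun setT (EFin \o (\1_(E t) : Omega -> R)).
  by move=> t; apply/measurable_EFinP; exact: measurable_indic.
have I0 : forall t w, setT w -> (0 <= (\1_(E t) w : R)%:E)%E.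
  by move=> t w _; rewrite lee_fin indicE ler0n.
have Isum : (\int[P]_(w in setT) (\sum_(t < T) (\1_(E t) w : R)%:E)
             = \sum_(t < T) P (E s))%E.
  rewrite ge0_integral_sum //; apply: eq_bigr => t _.
  by rewrite integral_indic // setIT; exact: Eeq.
have Ile : (\int[P]_(w in setT) (\sum_(t < T) (\1_(E t) w : R)%:E)
             <= (T%:R * a)%:E)%E.
  have J : (\int[P]_(w in setT) (cst (T%:R * a)%:E) w = (T%:R * a)%:E)%E.
    rewrite integral_cst // -[RHS]mule1; congr (_ * _)%E; exact: probability_setT.
  rewrite -J; apply: ge0_le_integral.
  - by [].
  - by move=> w _; apply: sume_ge0 => t _; exact: I0.
  - by apply: emeasurable_sum => t; exact: mI.
  - exact: measurable_cst.
  - by move=> w _; exact: ptw.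
have fE : P (E s) \is a fin_num by apply: fin_num_measure; exact: mE.
set p := fine (P (E s)).
have hp : P (E s) = p%:E by rewrite /p fineK.
have pa : p <= a.
  move: Ile; rewrite Isum hp sumEFin lee_fin sumr_const card_ord.
  rewrite (_ : p *+ T = T%:R * p); last by rewrite mulr_natl.
  by rewrite ler_pM2l.
have -> : [set w | let v := pv (sel (Y w)) k in (
             (1 - T%:R `^ (beta - 1)) * \sum_(t < T) v t ^+ 2
               <= \sum_(t < T | t != s) v t ^+ 2
             /\ \sum_(t < T | t != s) v t ^+ 2 <= \sum_(t < T) v t ^+ 2)%R]
        = ~` E s.
  apply/seteqP; split => w /=.
    rewrite -/c mulrBl mul1r => -[h _]; apply/negP; rewrite -leNgt /F.
    move: h; move: (c * _) => X.
    rewrite (bigD1 s) //=.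
    move: (pv (sel (Y w)) k s ^+ 2) (\sum_(i < T | i != s) _) => a1 a2.
    by move=> h; lra.
  move=> /negP; rewrite -leNgt /F -/c mulrBl mul1r.
  move: (c * _) => X.
  rewrite (bigD1 s) //= => h.
  have hs := sqr_ge0 (pv (sel (Y w)) k s).
  move: (pv (sel (Y w)) k s ^+ 2) (\sum_(i < T | i != s) _) h hs => a1 a2 h hs.
  by split; lra.
rewrite probability_setC // hp lee_fin.
by rewrite lerB.
Qed.
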